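(* Let $F$ be a connected graph and $Q$ a connected chordal graph. Let $\mu:V(F)\to V(Q)$ be a function such that for every induced path $p_1\cdots p_m$ in $F$ of length at most two, the vertices $\mu(p_1),\ldots,\mu(p_m)$ are pairwise distinct and $\mu(p_1)\cdots\mu(p_m)$ is an induced path of $Q$. Then $\mu$ is injective and preserves the adjacency relation, i.e. for all $v,w\in V(F)$, $vw\in E(F)$ if and only if $\mu(v)\mu(w)\in E(Q)$.
   Context: A graph is chordal if it has no induced cycle of length at least $4$. The length of a path is its number of edges. *)

(* Defs.v *)
From mathcomp Require Import all_boot.
Set Implicit Arguments. Unset Strict Implicit. Unset Printing Implicit Defensive.

Definition simple_graph (T : finType) (e : rel T) : Prop :=
  symmetric e /\ irreflexive e.

Definition connected_graph (T : finType) (e : rel T) : Prop :=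
  forall x y : T, connect e x y.

(* s = p_1 ... p_m (m >= 1) is an induced path: the vertices are pairwise
   distinct and p_i p_j is an edge iff |i - j| = 1.  Its length is m - 1. *)
Definition induced_path (T : finType) (e : rel T) (s : seq T) : Prop :=
  0 < size s /\ uniq s /\
  forall (x0 : T) (i j : nat), i < size s -> j < size s ->
    e (nth x0 s i) (nth x0 s j) = ((j == i.+1) || (i == j.+1)).

Definition induced_cycle (T : finType) (e : rel T) (s : seq T) : Prop :=
  2 < size s /\ uniq s /\
  forall (x0 : T) (i j : nat), i < size s -> j < size s ->
    e (nth x0 s i) (nth x0 s j) =
      ((j == i.+1 %% size s) || (i == j.+1 %% size s)).

Definition chordal (T : finType) (e : rel T) : Prop :=
  forall s : seq T, induced_cycle e s -> size s < 4.

(* Main.v *)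
Require Import Defs.
From mathcomp Require Import all_boot.
From mathcomp Require Import zify.
From Stdlib Require Import Classical.

Lemma modS' (b n : nat) : b < n -> b.+1 %% n = if b.+1 == n then 0 else b.+1.
Proof. move=> H; case: eqP => [->|ne]; first by rewrite modnn. rewrite modn_small //; lia. Qed.

Lemma cyc_lemma (T : finType) (e : rel T) (se : simple_graph e) (F : nat -> T) (n : nat) :
  2 < n ->
  (forall a b, a < b -> b < n -> F a != F b /\ e (F a) (F b) = (b == a.+1) || ((a == 0) && (b == n.-1))) ->
  induced_cycle e (mkseq F n).
Proof.
  case: se => sym irr.
  move=> Hn H; split; first by rewrite size_mkseq.
  split.
    apply/(uniqP (F 0)) => a b; rewrite !inE size_mkseq => Ha Hb.
    rewrite !nth_mkseq //.
    case: (ltngtP a b) => // [ab|ba] E.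
    - by case: (H a b ab Hb); rewrite E eqxx.
    - by case: (H b a ba Ha); rewrite E eqxx.
  move=> x0 i j; rewrite size_mkseq => Hi Hj; rewrite !nth_mkseq //.
  rewrite (modS' _ _ Hi) (modS' _ _ Hj).
  case: (ltngtP i j) => [ij|ji|<-].
  - case: (H i j ij Hj) => _ ->.
    case: (i.+1 =P n); case: (j.+1 =P n); move=> *; apply/idP/idP; lia.
  - rewrite sym; case: (H j i ji Hi) => _ ->.
    case: (i.+1 =P n); case: (j.+1 =P n); move=> *; apply/idP/idP; lia.
  - rewrite irr. case: (i.+1 =P n) => *; apply/idP/idP; lia.
Qed.

Lemma Qlemma (T : finType) (e : rel T) (se : simple_graph e) (ch : chordal e)
  (f : nat -> T) (k : nat) :
  (forall t, t < k -> e (f t) (f t.+1)) ->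
  (forall t, t.+2 <= k -> f t != f t.+2 /\ ~~ e (f t) (f t.+2)) ->
  forall d i, 0 < d -> i + d <= k -> f i != f (i + d) /\ e (f i) (f (i + d)) = (d == 1).
Proof.
  move=> He H2; have [sym irr] := se.
  elim/ltn_ind => d IH i d0 idk.
  case: (ltngtP d 2) => [d1|d3|d2].
  - have -> : d = 1 by lia.
    rewrite addn1 He; last by lia.
    split=> //; apply/eqP=> E; move: (He i ltac:(lia)); by rewrite E irr.
  -
    have G : forall a b, i <= a -> a < b -> b <= i + d -> (a, b) != (i, i + d) ->
        f a != f b /\ e (f a) (f b) = (b == a.+1).
      move=> a b ia ab bd ne.
      have := IH (b - a) ltac:(move: ne; rewrite xpair_eqE; case: eqP; case: eqP; lia) a ltac:(lia) ltac:(lia).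
      have -> : a + (b - a) = b by lia.
      case=> -> ->; split=> //; apply/idP/idP; lia.
    have Hneq : f i != f (i + d).
      apply/eqP => E.
      case: (ltngtP d 3) => [|d4|d3'].
      + lia.
      + have Hc : induced_cycle e (mkseq (fun t => f (i + t)) d).
          apply: (cyc_lemma _ _ se); first lia.
          move=> a b ab bd.
          case: (G (i + a) (i + b) ltac:(lia) ltac:(lia) ltac:(lia) _).
            rewrite xpair_eqE; apply/negP; case/andP => /eqP ? /eqP ?; lia.
          move=> -> Ge; split=> //.
          case: (a =P 0) => [a0|a0]; case: (b =P d.-1) => [bd1|bd1] /=; rewrite ?orbF; try (rewrite Ge; apply/idP/idP; lia).
          subst a; rewrite orbT.
          rewrite addn0 E sym; have -> : i + d = (i + b).+1 by lia.
          rewrite He //; lia.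
        have := ch _ Hc; rewrite size_mkseq; lia.
      + subst d. move: (He (i + 2) ltac:(lia)). rewrite -addnS -E sym.
        have := H2 i ltac:(lia). by rewrite addn2; case=> _ /negbTE ->.
    split=> //.
    have -> : (d == 1) = false by apply/negP => /eqP; lia.
    apply/negbTE/negP => E.
    have Hc : induced_cycle e (mkseq (fun t => f (i + t)) d.+1).
      apply: (cyc_lemma _ _ se); first lia.
      move=> a b ab bd.
      case: (a =P 0) => [a0|a0]; case: (b =P d) => [bd1|bd1] /=.
      - subst a b; rewrite addn0 E; split=> //; by rewrite orbT.
      - case: (G (i + a) (i + b) ltac:(lia) ltac:(lia) ltac:(lia) _).
          rewrite xpair_eqE; apply/negP; case/andP => /eqP ? /eqP ?; lia.
        move=> -> ->; split=> //; apply/idP/idP; lia.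
      - case: (G (i + a) (i + b) ltac:(lia) ltac:(lia) ltac:(lia) _).
          rewrite xpair_eqE; apply/negP; case/andP => /eqP ? /eqP ?; lia.
        move=> -> ->; split=> //; apply/idP/idP; lia.
      - case: (G (i + a) (i + b) ltac:(lia) ltac:(lia) ltac:(lia) _).
          rewrite xpair_eqE; apply/negP; case/andP => /eqP ? /eqP ?; lia.
        move=> -> ->; split=> //; apply/idP/idP; lia.
    have := ch _ Hc; rewrite size_mkseq; lia.
  - subst d; rewrite addn2; move: (H2 i ltac:(lia)); case=> -> /negbTE -> //.
Qed.

Definition walk (T : Type) (e : rel T) (g : nat -> T) (k : nat) (v w : T) :=
  g 0 = v /\ g k = w /\ forall t, t < k -> e (g t) (g t.+1).

Lemma reduce (T : eqType) (e : rel T) (v w : T) k g : walk _ e g k v w ->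
  exists k' g', walk _ e g' k' v w /\
    forall t, t.+2 <= k' -> g' t != g' t.+2 /\ ~~ e (g' t) (g' t.+2).
Proof.
  elim/ltn_ind: k g => k IH g [g0 [gk ge]].
  case: (classic (exists t, t.+2 <= k /\ (g t = g t.+2 \/ e (g t) (g t.+2)))).
  - case=> t [tk [E|E]].
    + apply: (IH (k - 2) _ (fun s => if s <= t then g s else g (s + 2))); first lia.
      split; first by rewrite leq0n.
      split.
        rewrite /=; case: leqP => H; last by rewrite -gk; congr g; lia.
        have -> : k - 2 = t by lia. by rewrite E -gk; congr g; lia.
      move=> s sk /=. case: (ltngtP s t) => [st|ts|st]; rewrite ?st.
      * apply: ge; lia.
      * rewrite addSn; apply: ge; lia.
      * rewrite E addSn addn2; apply: ge; lia.
    + apply: (IH (k - 1) _ (fun s => if s <= t then g s else g (s + 1))); first lia.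
      split; first by rewrite leq0n.
      split.
        rewrite /=; case: leqP => H; first lia. rewrite -gk; congr g; lia.
      move=> s sk /=. case: (ltngtP s t) => [st|ts|st]; rewrite ?st.
      * apply: ge; lia.
      * rewrite addSn; apply: ge; lia.
      * by rewrite addSn addn1.
  - move=> H; exists k, g; split; first by [].
    move=> t tk; split.
    + apply/eqP => E; apply: H; exists t; by split; [|left].
    + apply/negP => E; apply: H; exists t; by split; [|right].
Qed.

Lemma ip2 (T : finType) (e : rel T) (se : simple_graph e) a b :
  e a b -> induced_path e [:: a; b].
Proof.
  case: se => sym irr H; split=> //; split.
    rewrite /= inE andbT; apply/eqP => E; move: H; by rewrite E irr.
  move=> x0 [|[|i]] [|[|j]] //= _ _; by rewrite ?irr ?H // sym.
Qed.

Lemma ip3 (T : finType) (e : rel T) (se : simple_graph e) a b c :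
  e a b -> e b c -> a != c -> ~~ e a c -> induced_path e [:: a; b; c].
Proof.
  case: se => sym irr H1 H2 H3 H4; split=> //; split.
    rewrite /= !inE andbT negb_or H3 /= andbT.
    apply/andP; split; apply/eqP => E.
    - by move: H1; rewrite E irr.
    - by move: H2; rewrite E irr.
  move=> x0 [|[|[|i]]] [|[|[|j]]] //= _ _; rewrite ?irr ?H1 ?H2 ?(negbTE H4) // sym ?H1 ?H2 ?(negbTE H4) //.
Qed.

Theorem lemma3p2 (TF TQ : finType) (eF : rel TF) (eQ : rel TQ)
  (sF : simple_graph eF) (sQ : simple_graph eQ)
  (cF : connected_graph eF) (cQ : connected_graph eQ) (chQ : chordal eQ)
  (mu : TF -> TQ)
  (Hmu : forall s : seq TF, induced_path eF s -> size s <= 3 ->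
           uniq (map mu s) /\ induced_path eQ (map mu s)) :
  injective mu /\ (forall v w : TF, eF v w = eQ (mu v) (mu w)).
Proof.
  have edgeQ : forall a b, eF a b -> eQ (mu a) (mu b).
    move=> a b H; case: (Hmu _ (ip2 _ _ sF _ _ H) erefl) => _ [_ [_ Hp]].
    by have := Hp (mu a) 0 1 erefl erefl.
  have key : forall v w, exists k, (k = 0 /\ v = w) \/
      (0 < k /\ mu v != mu w /\ eQ (mu v) (mu w) = (k == 1) /\ (k == 1 -> eF v w)).
    move=> v w.
    case/connectP: (cF v w) => p Hp Hl.
    have W : walk _ eF (fun t => nth v (v :: p) t) (size p) v w.
      rewrite /walk; split; first by []. split; first by rewrite Hl -[last v p]/(last v (v::p)) -(nth_last v).
      move=> t tk /=; exact: (elimT (pathP v) Hp t tk).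
    case: (reduce _ _ _ _ _ _ W) => k [g [[g0 [gk ge]] gr]].
    exists k.
    case: (posnP k) => [k0|kp]; first by left; split=> //; rewrite -g0 -gk k0.
    right.
    have [symF irrF] := sF.
    have T3 : forall t, t.+2 <= k -> mu (g t) != mu (g t.+2) /\ ~~ eQ (mu (g t)) (mu (g t.+2)).
      move=> t tk; case: (gr t tk) => Hne Hna.
      have Hip := ip3 _ _ sF _ _ _ (ge t ltac:(lia)) (ge t.+1 ltac:(lia)) Hne Hna.
      case: (Hmu _ Hip erefl) => Hu [_ [_ Hp3]].
      split.
      - move: Hu => /=. rewrite !inE negb_or. by case/and3P => /andP [].  
      - by rewrite (Hp3 (mu v) 0 2 erefl erefl).
    have QL := Qlemma _ _ sQ chQ (fun t => mu (g t)) k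
      (fun t tk => edgeQ _ _ (ge t tk)) T3.
    case: (QL k 0 kp (leqnn _)); rewrite /= g0 add0n gk => H1 H2.
    split=> //; split=> //; split=> //.
    by move/eqP=> k1; subst k; rewrite -g0 -gk; apply: ge.
  split.
  - move=> v w E; case: (key v w) => k [[_ //]|[_ [H _]]].
    by rewrite E eqxx in H.
  - move=> v w; case: (key v w) => k [[_ <-]|[_ [_ [H1 H2]]]].
      by case: sF => _ ->; case: sQ => _ ->.
    rewrite H1; case: eqP => [k1|k1]; first by apply: H2; apply/eqP.
    apply/negbTE/negP => E; move: (edgeQ _ _ E); rewrite H1 => /eqP; done.
Qed.
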